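(* For every $q\ge2$, $\beta>0$ and every finite $d$-dimensional cube $V\subset\mathbb{Z}^d$, the Swendsen–Wang dynamics and the isolated vertices dynamics on the induced subgraph $G=(V,E)$ satisfy $\lambda(\boldsymbol{SW})\ge\lambda(\boldsymbol{I}_{\rm SW})$.
   Context: Potts measure with free boundary: $\pi(\sigma)\propto\exp(\beta\,\#\{(u,v)\in E:\sigma(u)=\sigma(v)\})$ on $\{1,\dots,q\}^V$; $p=1-e^{-\beta}$. Swendsen–Wang dynamics $\boldsymbol{SW}$: from $\sigma_t$, include each edge $(u,v)\in E$ with $\sigma_t(u)=\sigma_t(v)$ independently with probability $p$ to get $A_t\subseteq E$; assign each connected component of $(V,A_t)$ an independent uniform spin; discard edges. Isolated vertices dynamics $\boldsymbol{I}_{\rm SW}$: same first step, then assign an independent uniform spin only to each isolated vertex of $(V,A_t)$ (a vertex with no incident edge in $A_t$), leaving all other spins unchanged; discard edges. $\lambda(P)=1-\max\{|\lambda_2|,|\lambda_N|\}$ for a transition matrix reversible w.r.t. $\pi$ with eigenvalues $1=\lambda_1\ge\dots\ge\lambda_N$. *)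

(* Defs.v *)
From HB Require Import structures.
From mathcomp Require Import all_boot all_order all_algebra.
Set Implicit Arguments. Unset Strict Implicit. Unset Printing Implicit Defensive.
Import Order.TTheory GRing.Theory Num.Theory.
Local Open Scope ring_scope.

(* spin configurations sigma : T -> {1..q}, here represented by 'I_q *)
Definition config (T : finType) (q : nat) := {ffun T -> 'I_q}.

Definition mono_edges (T : finType) (q : nat) (E : {set {set T}})
    (sigma : {ffun T -> 'I_q}) : {set {set T}} :=
  [set e in E | [forall u in e, forall v in e, sigma u == sigma v]].

Definition edge_rel (T : finType) (A : {set {set T}}) : rel T :=
  fun u v => (u != v) && ([set u; v] \in A).

Definition isolated (T : finType) (A : {set {set T}}) (v : T) : bool :=
  [forall e in A, v \notin e].

(* probability that the percolation step (each monochromatic edge kept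
   independently with prob. p) yields exactly A (for A a subset of mono) *)
Definition perc_weight (R : numDomainType) (T : finType) (q : nat)
    (p : R) (E : {set {set T}}) (sigma : {ffun T -> 'I_q})
    (A : {set {set T}}) : R :=
  p ^+ #|A| * (1 - p) ^+ (#|mono_edges E sigma| - #|A|).

Definition SW_kernel (R : numFieldType) (T : finType) (q : nat) (p : R)
    (E : {set {set T}}) (sigma tau : {ffun T -> 'I_q}) : R :=
  \sum_(A in powerset (mono_edges E sigma))
    perc_weight p E sigma A *
    (if [forall u, forall v, connect (edge_rel A) u v ==> (tau u == tau v)]
     then (q%:R ^- n_comp (edge_rel A) predT)
     else 0).

Definition ISW_kernel (R : numFieldType) (T : finType) (q : nat) (p : R)
    (E : {set {set T}}) (sigma tau : {ffun T -> 'I_q}) : R :=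
  \sum_(A in powerset (mono_edges E sigma))
    perc_weight p E sigma A *
    (if [forall v, ~~ isolated A v ==> (tau v == sigma v)]
     then (q%:R ^- #|[set v | isolated A v]|)
     else 0).

(* matrix of a kernel on a finite state space S (rows = current state) *)
Definition kmx (R : Type) (S : finType) (K : S -> S -> R) : 'M[R]_#|S| :=
  \matrix_(i, j) K (enum_val i) (enum_val j).

(* lambda(P) = 1 - max(|lambda_2|, |lambda_N|) where
   lambda_1 >= ... >= lambda_N are the eigenvalues of P with multiplicity,
   i.e. the roots of the characteristic polynomial listed in decreasing order *)
Definition spectral_gap_of (R : rcfType) (n : nat) (P : 'M[R]_n) (g : R) :=
  exists s : seq R,
    [/\ char_poly P = \prod_(x <- s) ('X - x%:P),
        sorted >=%R s &
        g = 1 - Num.max `|nth 0 s 1| `|nth 0 s n.-1| ].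

Definition cube (d L : nat) := {ffun 'I_d -> 'I_L}.

Definition cube_adj (d L : nat) (u v : {ffun 'I_d -> 'I_L}) : bool :=
  [exists i, (((val (u i)).+1 == val (v i)) || ((val (v i)).+1 == val (u i)))
             && [forall j, (j != i) ==> (u j == v j)]].

Definition cube_edges (d L : nat) : {set {set {ffun 'I_d -> 'I_L}}} :=
  [set e | [exists u, exists v, cube_adj u v && (e == [set u; v])]].

(* Main.v *)
Require Import Defs.
From HB Require Import structures.
From mathcomp Require Import all_boot all_order all_algebra.
From mathcomp Require Import ring lra.
From mathcomp Require Import all_fingroup sesquilinear spectral complex.
Import Order.TTheory GRing.Theory Num.Theory.
Local Open Scope ring_scope.

Set Implicit Arguments. Unset Strict Implicit. Unset Printing Implicit Defensive.

Section Comb.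
Variables (T : finType) (q : nat) (E : {set {set T}}).
Hypothesis hE : forall e, e \in E -> exists u v, u != v /\ e = [set u; v].
Local Notation S := {ffun T -> 'I_q}.

Definition compat (A : {set {set T}}) (s : S) :=
  [forall u, forall v, connect (edge_rel A) u v ==> (s u == s v)].
Definition agree (A : {set {set T}}) (s t : S) :=
  [forall v, ~~ isolated A v ==> (t v == s v)].

Lemma edge_rel_sym (A : {set {set T}}) : symmetric (edge_rel A).
Proof.
by move=> u v; rewrite /edge_rel eq_sym setUC.
Qed.

Lemma compat_path (A : {set {set T}}) (s : S) :
  (forall x y, edge_rel A x y -> s x = s y) -> compat A s.
Proof.
move=> H; apply/forallP => u; apply/forallP => v; apply/implyP.
case/connectP => pth Hp ->; elim: pth u Hp => [|x pth IH] u /=; first by [].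
case/andP => /H -> /IH.
done.
Qed.

Lemma compat_connect (A : {set {set T}}) (s : S) u v : compat A s -> connect (edge_rel A) u v -> s u = s v.
Proof. by move=> /forallP /(_ u) /forallP /(_ v) /implyP H /H /eqP. Qed.

Lemma compatE (A : {set {set T}}) (s : S) : A \subset E ->
  (A \subset mono_edges E s) = compat A s.
Proof.
move=> AE; apply/idP/idP.
  move=> Am; apply: compat_path => x y /andP [nxy xyA].
  have := subsetP Am _ xyA; rewrite inE => /andP [_ /forallP /(_ x)].
  rewrite !inE eqxx => /forallP /(_ y); rewrite !inE eqxx orbT /=.
  by move/eqP.
move=> Hc; apply/subsetP => e eA; rewrite inE (subsetP AE _ eA) /=.
have [u [v [nuv De]]] := hE (subsetP AE _ eA).
have suv : s u = s v.
  apply: (compat_connect Hc); apply: connect1; rewrite /edge_rel nuv -De eA.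
  done.
apply/forallP => x; apply/implyP; rewrite De !inE => /orP [] /eqP ->;
apply/forallP => y; apply/implyP; rewrite !inE => /orP [] /eqP -> //;
by rewrite suv.
Qed.

Lemma edge_noniso (A : {set {set T}}) x y : edge_rel A x y -> ~~ isolated A x /\ ~~ isolated A y.
Proof.
case/andP => _ xyA; split; apply/negP => /forallP /(_ [set x; y]);
by rewrite xyA !inE eqxx ?orbT.
Qed.

Lemma agree_compat (A : {set {set T}}) (s t : S) : compat A s -> agree A s t -> compat A t.
Proof.
move=> cs ag; apply: compat_path => x y exy.
have [nx ny] := edge_noniso exy.
have := forallP ag x; rewrite nx /= => /eqP ->.
have := forallP ag y; rewrite ny /= => /eqP ->.
by apply: (compat_connect cs); apply: connect1.
Qed.

Lemma agree_sym (A : {set {set T}}) (s t : S) : agree A s t = agree A t s.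
Proof.
by apply/forallP/forallP => H v; rewrite eq_sym; apply: H.
Qed.

Lemma agree_trans (A : {set {set T}}) (s t r : S) : agree A s t -> agree A t r -> agree A s r.
Proof.
move=> H1 H2; apply/forallP => v; apply/implyP => nv.
by have := forallP H1 v; have := forallP H2 v; rewrite nv /= => /eqP -> /eqP ->.
Qed.

Lemma agree_refl (A : {set {set T}}) (s : S) : agree A s s.
Proof. by apply/forallP => v; rewrite eqxx implybT. Qed.

Lemma card_compat (A : {set {set T}}) : (#|[set s : S | compat A s]| <= q ^ n_comp (edge_rel A) predT)%N.
Proof.
set e := edge_rel A.
have sym : connect_sym e by apply: sym_connect_sym; apply: edge_rel_sym.
pose f (s : S) : {ffun {x : T | roots e x} -> 'I_q} := [ffun x => s (val x)].
rewrite -(card_in_imset (f := f)); last first.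
  move=> s1 s2; rewrite !inE => c1 c2 Hf; apply/ffunP => v.
  have r := roots_root sym v.
  have := congr1 (fun g : {ffun {x : T | roots e x} -> 'I_q} => g (exist _ (fingraph.root e v) r)) Hf; rewrite !ffunE /=.
  by rewrite -(compat_connect c1 (connect_root e v)) -(compat_connect c2 (connect_root e v)).
apply: leq_trans (max_card _) _.
rewrite card_ffun card_ord card_sig /n_comp_mem.
apply: eq_leq; congr (_ ^ _)%N; apply: eq_card => x; rewrite !inE /=.
by rewrite andbT.
Qed.

Lemma card_agree (A : {set {set T}}) (t : S) : #|[set s : S | agree A t s]| = (q ^ #|[set v | isolated A v]|)%N.
Proof.
pose I := [set v | isolated A v].
pose f (g : {ffun {x : T | x \in I} -> 'I_q}) : S :=
  [ffun v => if insub v is Some x then g x else t v].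
have finj : injective f.
  move=> g1 g2 H; apply/ffunP => x.
  have := congr1 (fun s : S => s (val x)) H; rewrite !ffunE valK.
  done.
have -> : [set s : S | agree A t s] = f @: setT.
  apply/setP => s; rewrite inE; apply/idP/imsetP.
    move=> ag; exists [ffun x => s (val x)] => //.
    apply/ffunP => v; rewrite ffunE; case: insubP => [x Ix <-|nI].
      by rewrite ffunE.
    have := forallP ag v; move: nI; rewrite inE => -> /= /eqP.
    done.
  case=> g _ ->; apply/forallP => v; apply/implyP => nv.
  rewrite ffunE insubN //; by rewrite inE.
rewrite card_imset // cardsT card_ffun card_ord card_sig.
by congr (_ ^ _)%N; apply: eq_card => x; rewrite !inE.
Qed.

End Comb.

Section Comb2.
Variables (R : rcfType) (T : finType) (q : nat) (p : R) (E : {set {set T}}).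
Hypothesis hE : forall e, e \in E -> exists u v, u != v /\ e = [set u; v].
Hypotheses (hp0 : 0 < p) (hp1 : p < 1) (hq : (0 < q)%N).
Local Notation S := {ffun T -> 'I_q}.

Definition piw (s : S) : R := ((1 - p) ^+ #|mono_edges E s|)^-1.
Definition wA (A : {set {set T}}) : R := p ^+ #|A| / (1 - p) ^+ #|A|.
Definition nc (A : {set {set T}}) := n_comp (edge_rel A) predT.
Definition ni (A : {set {set T}}) := #|[set v | isolated A v]|.

Lemma mono_sub (s : S) : mono_edges E s \subset E.
Proof. by apply/subsetP => e; rewrite inE => /andP []. Qed.

Lemma onemp_neq0 : 1 - p != 0.
Proof. by rewrite subr_eq0 eq_sym lt_eqF. Qed.

Lemma piw_gt0 s : 0 < piw s.
Proof. by rewrite /piw invr_gt0 exprn_gt0 // subr_gt0. Qed.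

Lemma wA_ge0 (A : {set {set T}}) : 0 <= wA A.
Proof.
by rewrite /wA divr_ge0 // exprn_ge0 // ?subr_ge0 ltW.
Qed.

Lemma piw_perc (s : S) (A : {set {set T}}) : A \subset mono_edges E s ->
  piw s * perc_weight p E s A = wA A.
Proof.
move=> Am; rewrite /piw /perc_weight /wA.
have le := subset_leq_card Am.
rewrite -{1}(subnKC le) exprD.
have h1 : (1 - p) ^+ #|A| != 0 by rewrite expf_neq0 // onemp_neq0.
have h2 : (1 - p) ^+ (#|mono_edges E s| - #|A|) != 0 by rewrite expf_neq0 // onemp_neq0.
set x := (1 - p) ^+ #|A| in h1 *; set y := (1 - p) ^+ _ in h2 *.
rewrite invfM (mulrC (p ^+ _) y) mulrA -(mulrA _ _ y) mulVf // mulr1 mulrC.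
by [].
Qed.

Lemma SW_W (s t : S) : piw s * SW_kernel p E s t =
  \sum_(A in powerset E) wA A * ((compat A s && compat A t)%:R * (q%:R ^- nc A)).
Proof.
rewrite /SW_kernel mulr_sumr big_mkcond [RHS]big_mkcond; apply: eq_bigr => A _.
rewrite !powersetE.
case Am: (A \subset mono_edges E s).
  have AE : A \subset E := subset_trans Am (mono_sub s).
  rewrite AE -(compatE hE s AE) Am /= mulrA piw_perc //.
  rewrite -[X in if X then _ else _]/(compat A t).
  by case: (compat A t); rewrite ?mul1r ?mul0r ?mulr0.
rewrite /=; case AE: (A \subset E) => //.
by rewrite -(compatE hE s AE) Am /= mul0r mulr0.
Qed.

Lemma ISW_W (s t : S) : piw s * ISW_kernel p E s t =
  \sum_(A in powerset E) wA A * ((compat A s && agree A s t)%:R * (q%:R ^- ni A)).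
Proof.
rewrite /ISW_kernel mulr_sumr big_mkcond [RHS]big_mkcond; apply: eq_bigr => A _.
rewrite !powersetE.
case Am: (A \subset mono_edges E s).
  have AE : A \subset E := subset_trans Am (mono_sub s).
  rewrite AE -(compatE hE s AE) Am /= mulrA piw_perc //.
  rewrite -[X in if X then _ else _]/(agree A s t).
  by case: (agree A s t); rewrite ?mul1r ?mul0r ?mulr0.
rewrite /=; case AE: (A \subset E) => //.
by rewrite -(compatE hE s AE) Am /= mul0r mulr0.
Qed.

End Comb2.

Lemma cauchy_schwarz_sum (R : rcfType) (I : finType) (P : pred I) (x : I -> R) :
  (\sum_(i | P i) x i) ^+ 2 <= #|[set i | P i]|%:R * \sum_(i | P i) x i ^+ 2.
Proof.
have H : 0 <= \sum_(i | P i) \sum_(j | P j) (x i - x j) ^+ 2.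
  by apply: sumr_ge0 => i _; apply: sumr_ge0 => j _; apply: sqr_ge0.
have N : \sum_(i | P i) (1 : R) = #|[set i | P i]|%:R.
  rewrite (eq_bigl (fun i => i \in [set i | P i])); last by move=> i; rewrite inE.
  by rewrite sumr_const.
have E1 : \sum_(i | P i) \sum_(j | P j) (x i - x j) ^+ 2 =
   \sum_(i | P i) \sum_(j | P j) (x i ^+ 2 + x j ^+ 2 - 2%:R * (x i * x j)).
  by apply: eq_bigr => i _; apply: eq_bigr => j _; ring.
move: H; rewrite E1.
under eq_bigr do rewrite sumrB big_split /=.
rewrite sumrB big_split /=.
have E2 : \sum_(i | P i) \sum_(j | P j) x i ^+ 2 = #|[set i | P i]|%:R * \sum_(i | P i) x i ^+ 2.
  rewrite -N mulr_sumr; apply: eq_bigr => i _.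
  by rewrite big_distrl /=; apply: eq_bigr => j _; rewrite mul1r.
have E3 : \sum_(i | P i) \sum_(j | P j) x j ^+ 2 = #|[set i | P i]|%:R * \sum_(i | P i) x i ^+ 2.
  rewrite -N mulr_suml; apply: eq_bigr => i _; by rewrite mul1r.
have E4 : \sum_(i | P i) \sum_(j | P j) 2%:R * (x i * x j) = 2%:R * (\sum_(i | P i) x i) ^+ 2.
  rewrite expr2 big_distrl mulr_sumr; apply: eq_bigr => i _.
  by rewrite big_distrr mulr_sumr /=.
rewrite E2 E3 E4.
set a := (\sum_(i | P i) x i) ^+ 2; set b := _ * _.
by lra.
Qed.

Section Key.
Variables (R : rcfType) (T : finType) (q : nat) (A : {set {set T}}).
Hypothesis hq : (0 < q)%N.
Local Notation S := {ffun T -> 'I_q}.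

Lemma keyA (a : S -> R) :
  q%:R ^- nc A * (\sum_(s | compat A s) a s) ^+ 2 <=
  q%:R ^- ni A * \sum_(s | compat A s) \sum_(t | agree A s t) a s * a t.
Proof.
pose g s := \sum_(t | agree A s t) a t.
pose m : R := q%:R ^+ ni A.
have m_gt0 : 0 < m by rewrite exprn_gt0 // ltr0n.
have m_neq0 : m != 0 by rewrite lt0r_neq0.
have cardag (t : S) (c : R) : \sum_(s | agree A t s) c = c * m.
  rewrite (eq_bigl (fun s => s \in [set s | agree A t s])); last by move=> s; rewrite inE.
  by rewrite sumr_const card_agree -mulr_natr natrX.
have swap (F : S -> S -> R) : \sum_(s | compat A s) \sum_(t | agree A s t) F s t =
    \sum_(t | compat A t) \sum_(s | agree A t s) F s t.
  rewrite (exchange_big_dep (compat A)); last by move=> s t cs ag; apply: agree_compat cs ag.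
  apply: eq_bigr => t ct; apply: eq_bigl => s.
  rewrite agree_sym; apply/andP/idP => [[] //|ag]; split => //.
  exact: agree_compat ct ag.
have E1 : \sum_(s | compat A s) \sum_(t | agree A s t) a s * a t =
          \sum_(s | compat A s) a s * g s.
  by apply: eq_bigr => s _; rewrite mulr_sumr.
have E2 : \sum_(s | compat A s) g s = m * \sum_(s | compat A s) a s.
  transitivity (\sum_(t | compat A t) \sum_(s | agree A t s) a t).
    exact: (swap (fun _ t => a t)).
  rewrite mulr_sumr; apply: eq_bigr => t _; by rewrite cardag mulrC.
have gE s t : agree A s t -> g s = g t.
  move=> hst; apply: eq_bigl => r; apply/idP/idP => h.
    by apply: agree_trans h; rewrite agree_sym.
  exact: agree_trans hst h.
have E3 : \sum_(s | compat A s) g s ^+ 2 = m * \sum_(s | compat A s) a s * g s.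
  transitivity (\sum_(s | compat A s) \sum_(t | agree A s t) a t * g t).
    apply: eq_bigr => s _; rewrite expr2 {1}/g big_distrl; apply: eq_bigr => t h.
    by rewrite (gE s t h).
  transitivity (\sum_(t | compat A t) \sum_(s | agree A t s) a t * g t).
    exact: (swap (fun _ t => a t * g t)).
  rewrite mulr_sumr; apply: eq_bigr => t _; by rewrite cardag mulrC.
have CS := cauchy_schwarz_sum (compat A) g.
have cardP : #|[set s : S | compat A s]|%:R <= q%:R ^+ nc A :> R.
  rewrite /nc -natrX ler_nat; exact: card_compat.
set c := q%:R ^- nc A.
have c_ge0 : 0 <= c by rewrite invr_ge0 exprn_ge0 // ler0n.
have cN : c * #|[set s : S | compat A s]|%:R <= 1.
  apply: le_trans (ler_wpM2l c_ge0 cardP) _.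
  by rewrite /c mulVf // expf_neq0 // pnatr_eq0 -lt0n.
set N := #|[set s : S | compat A s]|%:R in CS cN.
set G := \sum_(s | compat A s) g s in E2 CS.
set H := \sum_(s | compat A s) g s ^+ 2 in E3 CS.
have H_ge0 : 0 <= H by apply: sumr_ge0 => s _; apply: sqr_ge0.
have X_eq : \sum_(s | compat A s) a s = m^-1 * G by rewrite E2 mulKf.
have Y_eq : \sum_(s | compat A s) a s * g s = m^-1 * H by rewrite E3 mulKf.
rewrite E1 X_eq Y_eq exprMn -/m.
apply: (le_trans (y := c * (m^-1 ^+ 2 * (N * H)))).
  by apply: ler_wpM2l => //; apply: ler_wpM2l => //; apply: sqr_ge0.
have -> : c * (m^-1 ^+ 2 * (N * H)) = (c * N) * (m^-1 ^+ 2 * H) by ring.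
rewrite expr2 -[m^-1 * m^-1 * H]mulrA.
apply: ler_piMl => //.
by apply: mulr_ge0; [rewrite invr_ge0 ltW | apply: mulr_ge0 => //; rewrite invr_ge0 ltW].
Qed.

End Key.

Section QF.
Variables (R : rcfType) (T : finType) (q : nat) (p : R) (E : {set {set T}}).
Hypothesis hE : forall e, e \in E -> exists u v, u != v /\ e = [set u; v].
Hypotheses (hp0 : 0 < p) (hp1 : p < 1) (hq : (0 < q)%N).
Local Notation S := {ffun T -> 'I_q}.

Definition QF (K : S -> S -> R) (a : S -> R) :=
  \sum_(s : S) \sum_(t : S) (piw p E s * K s t) * (a s * a t).

Lemma QF_gen (F : {set {set T}} -> S -> S -> bool) (c : {set {set T}} -> R) (a : S -> R) :
 \sum_(s : S) \sum_(t : S) (\sum_(A in powerset E) wA p A * ((F A s t)%:R * c A)) * (a s * a t) =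
 \sum_(A in powerset E) wA p A * (c A * \sum_(s : S) \sum_(t : S) (F A s t)%:R * (a s * a t)).
Proof.
under eq_bigr do under eq_bigr do rewrite big_distrl.
under eq_bigr do rewrite exchange_big.
rewrite exchange_big; apply: eq_bigr => A _.
rewrite !mulr_sumr; apply: eq_bigr => s _.
rewrite !mulr_sumr; apply: eq_bigr => t _ /=.
by ring.
Qed.

Lemma sum_cond2 (b : S -> bool) (b' : S -> S -> bool) (x : S -> S -> R) :
  \sum_(s : S) \sum_(t : S) (b s && b' s t)%:R * x s t =
  \sum_(s | b s) \sum_(t | b' s t) x s t.
Proof.
rewrite [RHS]big_mkcond; apply: eq_bigr => s _; case: (b s) => /=.
  rewrite [RHS]big_mkcond; apply: eq_bigr => t _.
  by case: (b' s t); rewrite ?mul1r ?mul0r.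
by rewrite big1 // => t _; rewrite mul0r.
Qed.

Lemma QF_SW (a : S -> R) : QF (SW_kernel p E) a =
  \sum_(A in powerset E) wA p A * (q%:R ^- nc A * (\sum_(s | compat A s) a s) ^+ 2).
Proof.
rewrite /QF.
under eq_bigr do under eq_bigr do rewrite (SW_W hE hp1).
rewrite (QF_gen (fun A s t => compat A s && compat A t) (fun A => q%:R ^- nc A)).
apply: eq_bigr => A _; congr (_ * (_ * _)).
rewrite (sum_cond2 (compat A) (fun _ t => compat A t) (fun s t => a s * a t)).
by rewrite expr2 big_distrl; apply: eq_bigr => s _; rewrite big_distrr.
Qed.

Lemma QF_ISW (a : S -> R) : QF (ISW_kernel p E) a =
  \sum_(A in powerset E) wA p A *
    (q%:R ^- ni A * \sum_(s | compat A s) \sum_(t | agree A s t) a s * a t).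
Proof.
rewrite /QF.
under eq_bigr do under eq_bigr do rewrite (ISW_W hE hp1).
rewrite (QF_gen (fun A s t => compat A s && agree A s t) (fun A => q%:R ^- ni A)).
apply: eq_bigr => A _; congr (_ * (_ * _)).
exact: (sum_cond2 (compat A) (fun s t => agree A s t) (fun s t => a s * a t)).
Qed.

Lemma QF_SW_ge0 (a : S -> R) : 0 <= QF (SW_kernel p E) a.
Proof.
rewrite QF_SW; apply: sumr_ge0 => A _; apply: mulr_ge0; first exact: wA_ge0.
by apply: mulr_ge0; [rewrite invr_ge0 exprn_ge0 // ler0n | apply: sqr_ge0].
Qed.

Lemma QF_cmp (a : S -> R) : QF (SW_kernel p E) a <= QF (ISW_kernel p E) a.
Proof.
rewrite QF_SW QF_ISW; apply: ler_sum => A _; apply: ler_wpM2l; first exact: wA_ge0.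
exact: keyA.
Qed.

Lemma SW_sym (s t : S) : piw p E s * SW_kernel p E s t = piw p E t * SW_kernel p E t s.
Proof.
rewrite !(SW_W hE hp1); apply: eq_bigr => A _; by rewrite andbC.
Qed.

Lemma ISW_sym (s t : S) : piw p E s * ISW_kernel p E s t = piw p E t * ISW_kernel p E t s.
Proof.
rewrite !(ISW_W hE hp1); apply: eq_bigr => A _.
rewrite (_ : (compat A s && agree A s t) = (compat A t && agree A t s)) //.
rewrite [agree A s t]agree_sym.
by apply/andP/andP => [] [c ag]; split => //; apply: agree_compat c _; rewrite // agree_sym.
Qed.

End QF.

Local Open Scope sesquilinear_scope.

Section L1.
Variable R : rcfType.
Local Notation C := R[i].
Variable n : nat.

Definition qf (A : 'M[C]_n) (x : 'rV[C]_n) : C := (x *m A *m x ^t* ) 0 0.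

Lemma qf_diag (X : 'rV[C]_n) (c : 'rV[C]_n) :
  qf (diag_mx X) c = \sum_i X 0 i * `|c 0 i| ^+ 2.
Proof.
rewrite /qf mxE; apply: eq_bigr => i _.
rewrite mul_mx_diag !mxE normCK; ring.
Qed.

Lemma qf_conj (U A : 'M[C]_n) (x : 'rV[C]_n) :
  qf (U ^t* *m A *m U) x = qf A (x *m U ^t*).
Proof.
rewrite /qf trmx_mul map_mxM trmxCK !mulmxA.
done.
Qed.

Lemma qf1 (x : 'rV[C]_n) : qf 1%:M x = \sum_i `|x 0 i| ^+ 2.
Proof.
rewrite /qf mulmx1 mxE; apply: eq_bigr => i _; rewrite !mxE normCK.
done.
Qed.

Lemma qf1_unitary (U : 'M[C]_n) (x : 'rV[C]_n) : U ^t* *m U = 1%:M ->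
  qf 1%:M (x *m U ^t*) = qf 1%:M x.
Proof.
move=> HU; rewrite -qf_conj mulmx1 HU.
done.
Qed.

End L1.

Lemma char_poly_similar (F : fieldType) n (V A : 'M[F]_n) : V \in unitmx ->
  char_poly (invmx V *m A *m V) = char_poly A.
Proof.
move=> uV; rewrite /char_poly /char_poly_mx.
have -> : 'X%:M - map_mx polyC (invmx V *m A *m V) =
    map_mx polyC (invmx V) *m ('X%:M - map_mx polyC A) *m map_mx polyC V.
  rewrite mulmxBr mulmxBl !map_mxM; congr (_ - _).
  rewrite mul_mx_scalar -scalemxAl -map_mxM mulVmx // map_mx1.
  by rewrite scalemx1.
rewrite !det_mulmx mulrAC -det_mulmx -map_mxM mulVmx // map_mx1 det1 mul1r.
done.
Qed.

Section L2.
Variable R : rcfType.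
Local Notation C := R[i].
Variable n : nat.

Lemma spec_real (M : 'M[R]_n) : M^T = M ->
  exists (U : 'M[C]_n) (r : 'I_n -> R),
   [/\ U ^t* *m U = 1%:M,
       char_poly M = \prod_i ('X - (r i)%:P) &
       forall x, qf (map_mx (real_complex R) M) x =
                 \sum_i real_complex R (r i) * `|(x *m U ^t*) 0 i| ^+ 2].
Proof.
move=> Msym; set MC := map_mx (real_complex R) M.
have herm : MC \is hermsymmx.
  apply/is_hermitianmxP; rewrite expr0 scale1r; apply/matrixP => i j.
  rewrite !mxE conj_Creal; last by apply/complex_realP; eexists.
  by have /matrixP /(_ i j) := Msym; rewrite mxE => ->.
have /orthomx_spectralP Meq := hermitian_normalmx herm.
set U := spectralmx MC in Meq; set X := spectral_diag MC in Meq.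
have Uu : U \is unitarymx by apply: spectral_unitarymx.
have UUt : U *m U ^t* = 1%:M by apply/unitarymxP.
have UtU : U ^t* *m U = 1%:M by apply: mulmx1C.
have Xr : X \is a realmx by apply: hermitian_spectral_diag_real.
pose r i := complex.Re (X 0 i).
have rE i : real_complex R (r i) = X 0 i by apply: RRe_real; apply: (mxOverP Xr).
exists U, r; split => //.
  apply: (@map_poly_inj _ _ (real_complex R)).
  rewrite map_char_poly -/MC Meq char_poly_similar ?unitarymx_unit //.
  rewrite char_poly_trig ?diag_mx_is_trig // rmorph_prod /=.
  apply: eq_bigr => i _; rewrite map_polyXsubC /= rE mxE eqxx mulr1n.
  done.
move=> x; rewrite Meq invmx_unitary // qf_conj qf_diag.
by apply: eq_bigr => i _; rewrite rE.
Qed.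

End L2.

Section L3.
Variable R : rcfType.
Local Notation C := R[i].
Local Notation rc := (real_complex R).
Variable n : nat.

Definition RF (M : 'M[R]_n) (a : 'I_n -> R) := \sum_i \sum_j M i j * (a i * a j).

Lemma Re_sum (I : Type) (r : seq I) (P : pred I) (F : I -> C) :
  complex.Re (\sum_(i <- r | P i) F i) = \sum_(i <- r | P i) complex.Re (F i).
Proof.
apply: (big_morph (@complex.Re R)) => [x y|]; last by [].
by case: x; case: y.
Qed.

Lemma Im_sum (I : Type) (r : seq I) (P : pred I) (F : I -> C) :
  complex.Im (\sum_(i <- r | P i) F i) = \sum_(i <- r | P i) complex.Im (F i).
Proof.
apply: (big_morph (@complex.Im R)) => [x y|]; last by [].
by case: x; case: y.
Qed.

Lemma term_ReIm (z w : C) (m : R) :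
  z * rc m * w^* = Complex (m * (complex.Re z * complex.Re w + complex.Im z * complex.Im w))
                           (m * (complex.Im z * complex.Re w - complex.Re z * complex.Im w)).
Proof.
case: z => a b; case: w => c d.
have -> : (Complex a b : C) * rc m = Complex (a * m) (b * m).
  by apply/eqP; rewrite eq_complex /=; apply/andP; split; apply/eqP; ring.
have -> : (Complex c d : C)^* = Complex c (- d) by [].
apply/eqP; rewrite eq_complex /=; apply/andP; split; apply/eqP; ring.
Qed.

Lemma qf_real (M : 'M[R]_n) : M^T = M -> forall x : 'rV[C]_n,
  qf (map_mx rc M) x =
  rc (RF M (fun i => complex.Re (x 0 i)) + RF M (fun i => complex.Im (x 0 i))).
Proof.
move=> Msym x.
have Ms i j : M i j = M j i by have /matrixP /(_ j i) := Msym; rewrite mxE.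
have -> : qf (map_mx rc M) x = \sum_i \sum_j x 0 j * rc (M j i) * (x 0 i)^*.
  rewrite /qf mxE; apply: eq_bigr => i _; rewrite !mxE big_distrl /=.
  by apply: eq_bigr => j _; rewrite !mxE.
under eq_bigr do under eq_bigr do rewrite term_ReIm.
apply/eqP; rewrite eq_complex; apply/andP; split; apply/eqP.
  rewrite Re_sum /=; under eq_bigr do rewrite Re_sum /=.
  rewrite /RF -big_split /=; apply: eq_bigr => i _.
  rewrite -big_split /=; apply: eq_bigr => j _.
  by rewrite (Ms i j); ring.
rewrite Im_sum /=; under eq_bigr do rewrite Im_sum /=.
set a := fun i => complex.Re (x 0 i); set b := fun i => complex.Im (x 0 i).
have H : \sum_i \sum_j M j i * (b j * a i - a j * b i) =
         \sum_i \sum_j M j i * (b j * a i) - \sum_i \sum_j M j i * (a j * b i).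
  rewrite -sumrB; apply: eq_bigr => i _; rewrite -sumrB; apply: eq_bigr => j _; ring.
rewrite H exchange_big /=.
apply/eqP; rewrite subr_eq0; apply/eqP.
by apply: eq_bigr => i _; apply: eq_bigr => j _; rewrite (Ms i j); ring.
Qed.

End L3.

Section L4.
Variable R : rcfType.
Local Notation C := R[i].
Local Notation rc := (real_complex R).
Variable n : nat.

Lemma rowU (U : 'M[C]_n) (HU : U *m U ^t* = 1%:M) (i k : 'I_n) :
  (row i U *m U ^t*) 0 k = (i == k)%:R.
Proof. by rewrite -row_mul HU !mxE. Qed.

Lemma sum2 (f : 'I_n -> C) (a b : C) (i0 i1 : 'I_n) : i0 != i1 ->
  \sum_k f k * `|a * (i0 == k)%:R + b * (i1 == k)%:R| ^+ 2 =
  f i0 * `|a| ^+ 2 + f i1 * `|b| ^+ 2.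
Proof.
move=> h; rewrite (bigD1 i0) //= (bigD1 i1) /=; last by rewrite eq_sym.
rewrite big1 ?addr0; last first.
  move=> k /andP [k1 k0]; rewrite ![_ == k]eq_sym (negbTE k1) (negbTE k0).
  by rewrite !mulr0 addr0 normr0 expr0n mulr0.
rewrite eqxx (negbTE h) eq_sym (negbTE h) eqxx.
by rewrite !mulr0 !mulr1 addr0 add0r.
Qed.

Lemma lec_rc (x y : R) : (rc x <= rc y) = (x <= y).
Proof. exact: lecR. Qed.

Lemma weyl (U1 U2 : 'M[C]_n) (r1 r2 : 'I_n -> R) (Q1 Q2 : 'rV[C]_n -> C)
  (HU1 : U1 ^t* *m U1 = 1%:M) (HU2 : U2 ^t* *m U2 = 1%:M)
  (HQ1 : forall x, Q1 x = \sum_i rc (r1 i) * `|(x *m U1 ^t*) 0 i| ^+ 2)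
  (HQ2 : forall x, Q2 x = \sum_i rc (r2 i) * `|(x *m U2 ^t*) 0 i| ^+ 2)
  (Hle : forall x, Q1 x <= Q2 x)
  (i0 i1 : 'I_n) (hi : i0 != i1) (h01 : r1 i1 <= r1 i0)
  (j0 : 'I_n) (l2 : R) (hj : forall j, j != j0 -> r2 j <= l2) :
  r1 i1 <= l2.
Proof.
have HU1' : U1 *m U1 ^t* = 1%:M by apply: mulmx1C.
pose u0 := row i0 U1; pose u1 := row i1 U1.
pose al := (u0 *m U2 ^t*) 0 j0; pose be := (u1 *m U2 ^t*) 0 j0.
pose a : C := if al == 0 then 1 else be.
pose b : C := if al == 0 then 0 else - al.
pose x := a *: u0 + b *: u1.
have c1E k : (x *m U1 ^t*) 0 k = a * (i0 == k)%:R + b * (i1 == k)%:R.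
  by rewrite /x mulmxDl -!scalemxAl [LHS]mxE ![fun_of_matrix (_ *: _) _ _]mxE !rowU.
have c2j0 : (x *m U2 ^t*) 0 j0 = 0.
  rewrite /x mulmxDl -!scalemxAl [LHS]mxE ![fun_of_matrix (_ *: _) _ _]mxE -/al -/be /a /b.
  case: (al =P 0) => [H|_]; first by rewrite H mul1r mul0r addr0.
  by rewrite mulNr mulrC subrr.
pose N := `|a| ^+ 2 + `|b| ^+ 2.
have N_gt0 : 0 < N.
  rewrite /N /a /b; case: (al =P 0) => [_|/eqP nal].
    by rewrite normr1 expr1n normr0 expr0n addr0 ltr01.
  apply: ltr_wpDl; first exact: (exprn_ge0 _ (normr_ge0 _)).
  by rewrite exprn_gt0 // normr_gt0 oppr_eq0.
have NE : \sum_k `|(x *m U1 ^t*) 0 k| ^+ 2 = N.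
  transitivity (\sum_k (fun _ => 1) k * `|a * (i0 == k)%:R + b * (i1 == k)%:R| ^+ 2).
    by apply: eq_bigr => k _; rewrite c1E mul1r.
  by rewrite sum2 // !mul1r.
have L1 : rc (r1 i1) * N <= Q1 x.
  rewrite HQ1; under eq_bigr do rewrite c1E.
  rewrite sum2 // /N mulrDr lerD2r.
  apply: ler_wpM2r; first exact: (exprn_ge0 _ (normr_ge0 _)).
  by rewrite lec_rc.
have L2 : Q2 x <= rc l2 * N.
  rewrite HQ2 -NE.
  have -> : \sum_k `|(x *m U1 ^t*) 0 k| ^+ 2 = \sum_k `|(x *m U2 ^t*) 0 k| ^+ 2.
    by rewrite -!qf1 !qf1_unitary.
  rewrite mulr_sumr; apply: ler_sum => k _.
  have [->|nk] := eqVneq k j0; first by rewrite c2j0 normr0 expr0n !mulr0.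
  by apply: ler_wpM2r; [exact: (exprn_ge0 _ (normr_ge0 _)) | rewrite lec_rc; apply: hj].
have := le_trans L1 (le_trans (Hle x) L2).
by rewrite ler_pM2r // lec_rc.
Qed.

End L4.

Lemma aux (R : rcfType) (x y k : R) : x != 0 -> y != 0 -> x * k * y^-1 = (x * x * k) / (x * y).
Proof. move=> hx hy. field. by rewrite hx hy. Qed.

Section L5.
Variable R : rcfType.
Local Notation C := R[i].
Local Notation rc := (real_complex R).
Variable n : nat.

Lemma char_poly_similar' (V A : 'M[R]_n) : V \in unitmx ->
  char_poly (V *m A *m invmx V) = char_poly A.
Proof.
move=> uV; rewrite -{1}(invmxK V) char_poly_similar //.
by rewrite unitmx_inv.
Qed.

Lemma symmetrize (K : 'M[R]_n) (w : 'I_n -> R) (hw : forall i, 0 < w i)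
  (sym : forall i j, w i * K i j = w j * K j i) :
  exists M : 'M[R]_n, [/\ M^T = M, char_poly K = char_poly M &
     forall a : 'I_n -> R,
       RF M a = \sum_i \sum_j (w i * K i j) *
                  (a i / Num.sqrt (w i) * (a j / Num.sqrt (w j)))].
Proof.
pose d i := Num.sqrt (w i).
have d_gt0 i : 0 < d i by rewrite sqrtr_gt0.
have d_neq0 i : d i != 0 by rewrite lt0r_neq0.
have dd i : d i * d i = w i by rewrite -expr2 sqr_sqrtr // ltW.
pose V := diag_mx (\row_i d i); pose W := diag_mx (\row_i (d i)^-1).
have VW : V *m W = 1%:M.
  apply/matrixP => i j; rewrite mul_diag_mx !mxE.
  case: (eqVneq i j) => [->|nij]; first by rewrite !mulr1n mulfV.
  by rewrite !mulr0n mulr0.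
have uV : V \in unitmx by case: (mulmx1_unit VW).
have iV : invmx V = W by rewrite -[invmx V]mulmx1 -VW mulmxA mulVmx // mul1mx.
pose M := V *m K *m invmx V.
have ME i j : M i j = (w i * K i j) / (d i * d j).
  rewrite /M iV mul_mx_diag mul_diag_mx !mxE -dd.
  exact: aux.
exists M; split.
- apply/matrixP => i j; rewrite mxE !ME (sym j i) (mulrC (d j)).
  done.
- by rewrite char_poly_similar'.
- move=> a; rewrite /RF.
  apply: eq_bigr => i _; apply: eq_bigr => j _; rewrite ME.
  by rewrite invfM; ring.
Qed.

End L5.

Section L6.
Variable R : rcfType.
Local Notation C := R[i].
Local Notation rc := (real_complex R).
Variable n : nat.

Lemma sort_eig (r : 'I_n -> R) : exists (s : seq R) (sg : {perm 'I_n}),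
  [/\ \prod_i ('X - (r i)%:P) = \prod_(x <- s) ('X - x%:P), sorted >=%R s,
      size s = n & forall k : 'I_n, nth 0 s k = r (sg k)].
Proof.
pose t := [tuple r i | i < n].
pose s := sort >=%R t.
have pst : perm_eq s t by rewrite perm_sort.
have [sg Hs] := tuple_permP pst.
exists s, sg; split.
- by rewrite (perm_big _ pst) /= big_map big_enum /=; apply: eq_bigl => i; rewrite inE.
- by apply: sort_sorted => x y; rewrite orbC; apply: le_total.
- by rewrite size_sort size_tuple.
- move=> k; rewrite Hs -(tnth_nth 0 [tuple tnth t (sg i) | i < n] k).
  by rewrite !tnth_mktuple.
Qed.

Lemma sorted_ge (s : seq R) (k l : nat) : sorted >=%R s -> (k <= l)%N -> (l < size s)%N ->
  nth 0 s l <= nth 0 s k.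
Proof.
move=> ss kl ls.
have tr : transitive (>=%R : rel R) by move=> ? ? ? h1 h2; exact: le_trans h2 h1.
have rf : reflexive (>=%R : rel R) by move=> x; exact: lexx.
apply: (sorted_leq_nth tr rf 0 ss) => //; rewrite inE //.
exact: leq_ltn_trans kl ls.
Qed.

End L6.

Section L7.
Variable R : rcfType.
Local Notation C := R[i].
Local Notation rc := (real_complex R).
Variable n : nat.

Lemma gap_compare (hn : (1 < n)%N) (K1 K2 : 'M[R]_n) (w : 'I_n -> R)
  (hw : forall i, 0 < w i)
  (sym1 : forall i j, w i * K1 i j = w j * K1 j i)
  (sym2 : forall i j, w i * K2 i j = w j * K2 j i)
  (psd1 : forall a : 'I_n -> R, 0 <= \sum_i \sum_j (w i * K1 i j) * (a i * a j))
  (cmp : forall a : 'I_n -> R, \sum_i \sum_j (w i * K1 i j) * (a i * a j) <=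
                               \sum_i \sum_j (w i * K2 i j) * (a i * a j)) :
  exists g1 g2 : R, [/\ spectral_gap_of K1 g1, spectral_gap_of K2 g2 & g2 <= g1].
Proof.
have [M1 [M1s cp1 RF1]] := symmetrize hw sym1.
have [M2 [M2s cp2 RF2]] := symmetrize hw sym2.
have RFpsd a : 0 <= RF M1 a by rewrite RF1; apply: psd1.
have RFcmp a : RF M1 a <= RF M2 a by rewrite RF1 RF2; apply: cmp.
pose Q1 x := qf (map_mx rc M1) x; pose Q2 x := qf (map_mx rc M2) x.
have Qle x : Q1 x <= Q2 x by rewrite /Q1 /Q2 !qf_real // lecR lerD.
have Qge0 x : 0 <= Q1 x by rewrite /Q1 qf_real // ler0c addr_ge0.
have [U1 [r1 [HU1 cpM1 HQ1]]] := spec_real M1s.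
have [U2 [r2 [HU2 cpM2 HQ2]]] := spec_real M2s.
have r1_ge0 j : 0 <= r1 j.
  have HU1' : U1 *m U1 ^t* = 1%:M by apply: mulmx1C.
  have := Qge0 (row j U1); rewrite /Q1 HQ1.
  rewrite (bigD1 j) //= big1 => [|k kj]; last first.
    by rewrite rowU // eq_sym (negbTE kj) normr0 expr0n mulr0.
  by rewrite rowU // eqxx normr1 expr1n mulr1 addr0 ler0c.
have [s1 [sg1 [ps1 ss1 sz1 nth1]]] := sort_eig r1.
have [s2 [sg2 [ps2 ss2 sz2 nth2]]] := sort_eig r2.
have h0 : (0 < n)%N by apply: ltnW.
have hl : (n.-1 < n)%N by rewrite ltn_predL.
pose k0 : 'I_n := Ordinal h0; pose k1 : 'I_n := Ordinal hn; pose kl : 'I_n := Ordinal hl.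
exists (1 - Num.max `|nth 0 s1 1| `|nth 0 s1 n.-1|),
       (1 - Num.max `|nth 0 s2 1| `|nth 0 s2 n.-1|).
split.
- by exists s1; split => //; rewrite cp1 cpM1 ps1.
- by exists s2; split => //; rewrite cp2 cpM2 ps2.
have e11 : nth 0 s1 1 = r1 (sg1 k1) := nth1 k1.
have e1l : nth 0 s1 n.-1 = r1 (sg1 kl) := nth1 kl.
have e10 : nth 0 s1 0 = r1 (sg1 k0) := nth1 k0.
have e21 : nth 0 s2 1 = r2 (sg2 k1) := nth2 k1.
have key : r1 (sg1 k1) <= r2 (sg2 k1).
  have hi : sg1 k0 != sg1 k1 by rewrite (inj_eq perm_inj) -val_eqE.
  have h01 : r1 (sg1 k1) <= r1 (sg1 k0).
    by rewrite -e11 -e10; apply: sorted_ge => //; rewrite sz1.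
  have hj : forall j, j != sg2 k0 -> r2 j <= r2 (sg2 k1).
    move=> j hj; have -> : j = sg2 ((sg2^-1)%g j) by rewrite permKV.
    rewrite -nth2 -e21; apply: sorted_ge => //; last by rewrite sz2.
    rewrite lt0n; apply/negP => /eqP h; move: hj; rewrite -{1}(permKV sg2 j).
    by rewrite (inj_eq perm_inj) -val_eqE /= h.
  exact: (weyl HU1 HU2 HQ1 HQ2 Qle hi h01 hj).
have a1l : r1 (sg1 kl) <= r1 (sg1 k1).
  rewrite -e11 -e1l; apply: sorted_ge => //; last by rewrite sz1.
  by rewrite -ltnS prednK.
have al0 := r1_ge0 (sg1 kl).
have M1le : Num.max `|nth 0 s1 1| `|nth 0 s1 n.-1| <= r1 (sg1 k1).
  by rewrite e11 e1l ge_max !ger0_norm // ?lexx //; apply: le_trans a1l.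
have M2ge : r2 (sg2 k1) <= Num.max `|nth 0 s2 1| `|nth 0 s2 n.-1|.
  by rewrite le_max e21 ler_norm.
set m1 := Num.max _ _ in M1le *; set m2 := Num.max _ _ in M2ge *.
lra.
Qed.

End L7.

Local Close Scope sesquilinear_scope.

Lemma reidx (R : rcfType) (S : finType) (F : S -> R) :
  \sum_(i < #|S|) F (enum_val i) = \sum_s F s.
Proof. by rewrite -(big_enum_val F). Qed.

Lemma hE_cube d L : forall e, e \in cube_edges d L ->
  exists u v, u != v /\ e = [set u; v].
Proof.
move=> e; rewrite inE => /existsP [u /existsP [v /andP [adj /eqP ->]]].
exists u, v; split => //; apply/eqP => euv; move: adj; rewrite euv.
case/existsP => i /andP [h _]; move: h; rewrite orbb => /eqP h.
exact: (n_Sn _ (esym h)).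
Qed.

Lemma QF_kmx (R : rcfType) (T : finType) (q : nat) (p : R) (E : {set {set T}})
   (K : {ffun T -> 'I_q} -> {ffun T -> 'I_q} -> R) (a : 'I_#|{ffun T -> 'I_q}| -> R) :
  \sum_i \sum_j (piw p E (enum_val i) * kmx K i j) * (a i * a j) =
  QF p E K (fun s => a (enum_rank s)).
Proof.
rewrite /QF -[RHS]reidx; apply: eq_bigr => i _; rewrite -[RHS]reidx; apply: eq_bigr => j _.
by rewrite !mxE !enum_valK.
Qed.

Unset Implicit Arguments. Set Strict Implicit.

Theorem mainTheorem8 (R : rcfType) (q d L : nat) (p : R)
    (hq : (2 <= q)%N) (hd : (0 < d)%N) (hL : (0 < L)%N)
    (hp0 : 0 < p) (hp1 : p < 1) :
  exists gSW gI : R,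
    [/\ spectral_gap_of
          (kmx (SW_kernel (T := {ffun 'I_d -> 'I_L}) (q := q) p (cube_edges d L)))
          gSW,
        spectral_gap_of
          (kmx (ISW_kernel (T := {ffun 'I_d -> 'I_L}) (q := q) p (cube_edges d L)))
          gI &
        gI <= gSW].
Proof.
have hq0 : (0 < q)%N by apply: leq_trans hq.
have hE := @hE_cube d L.
have hn : (1 < #|{ffun {ffun 'I_d -> 'I_L} -> 'I_q}|)%N.
  rewrite card_ffun card_ord card_ffun !card_ord.
  have hm : (0 < L ^ d)%N by rewrite expn_gt0 hL.
  rewrite -(prednK hm) expnS; apply: leq_trans hq _.
  by apply: leq_pmulr; rewrite expn_gt0 hq0.
apply: (gap_compare hn (w := fun i => piw p (cube_edges d L) (enum_val i))).
- by move=> i; apply: piw_gt0.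
- by move=> i j; rewrite !mxE; apply: (SW_sym hE hp1).
- by move=> i j; rewrite !mxE; apply: (ISW_sym hE hp1).
- by move=> a; rewrite QF_kmx; apply: (QF_SW_ge0 hE hp0 hp1).
- by move=> a; rewrite !QF_kmx; apply: (QF_cmp hE hp0 hp1 hq0).
Qed.
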